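(* Let $\alpha$ be an admissible family of weights with basic coefficients $\nu_{\mathsf q},\xi_{\mathsf q},\nu_{\mathsf q\mathsf Q},\xi_{\mathsf q\mathsf Q}$. Then for all $\mathsf q,\mathsf Q\in\mathcal F$: (1) $\nu_{\mathsf q}^2=\nu_{\mathsf q}$ and $\xi_{\mathsf q}^2=\xi_{\mathsf q}$, i.e. $\nu_{\mathsf q},\xi_{\mathsf q}\in\{0,1\}$; (2) $t\,\nu_{\mathsf q}=t$ for $t\in\{\nu_{\mathsf q\mathsf Q},\xi_{\mathsf q},\xi_{\mathsf q\mathsf Q}\}$, i.e. $\nu_{\mathsf q}=0$ implies $\nu_{\mathsf q\mathsf Q}=\xi_{\mathsf q}=\xi_{\mathsf q\mathsf Q}=0$; (3) $|t|^2t=t$ for $t\in\{\nu_{\mathsf q\mathsf Q},\xi_{\mathsf q\mathsf Q}\}$, i.e. $\nu_{\mathsf q\mathsf Q},\xi_{\mathsf q\mathsf Q}\in\{0\}\cup\mathbb T$; (4) $\nu_{\mathsf q\mathsf Q}\xi_{\mathsf q}=\xi_{\mathsf q\mathsf Q}\xi_{\mathsf q}$, i.e. $\xi_{\mathsf q}=1$ implies $\nu_{\mathsf q\mathsf Q}=\xi_{\mathsf q\mathsf Q}$; (5) $\nu_{\mathsf q\mathsf Q}\xi_{\mathsf q\mathsf Q}=\nu_{\mathsf q\mathsf Q}\xi_{\mathsf q\mathsf Q}\xi_{\mathsf q}$, i.e. $\xi_{\mathsf q}=0$ implies $\nu_{\mathsf q\mathsf Q}=0$ or $\xi_{\mathsf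 q\mathsf Q}=0$.
   Context: Fix a finite set $\mathcal F$ of faces; $\mathbb T$ is the unit circle. For a word $\mathbf f\in\mathcal F^n$ ($n\ge1$), $[n]_{\mathbf f}$ is $\{1,\dots,n\}$ with faces $\ell\mapsto\mathbf f(\ell)$ (legs); $\mathcal P(\mathbf f)$ is the set of set partitions of $[n]$ viewed with these faces, $\mathcal P=\bigcup_{\mathbf f}\mathcal P(\mathbf f)$. A finite totally ordered set $S$ with a face map is identified with $[m]_{|S|}$ through the order-preserving bijection, so partitions of such sets are elements of $\mathcal P$. $1_{\mathbf f}$ is the one-block partition. For blocks $\beta_1\ne\beta_2$ of $\pi$, $\pi_{\beta_1\smile\beta_2}=(\pi\setminus\{\beta_1,\beta_2\})\cup\{\beta_1\cup\beta_2\}$, and $\{\beta_1,\beta_2\}$ is regarded as a partition of the multi-faced set $\beta_1\cup\beta_2$. Reduction: for $\pi\in\mathcal P(\mathbf f)$ let $s\sim t$ ($s\le t$) iff all $r\in[s,t]$ have the same face and lie in the same block; $\pi_{\mathrm{red}}$ is the induced partition of $[n]/\sim$. Mirror: $\overline{\mathbf f}(i)=\mathbf f(n+1-i)$, $\overline\pi=\{\{n+1-i:i\in\beta\}:\beta\in\pi\}$. Admissible: $\alpha=(\alpha_\pi)_{\pi\in\mathcal P}\subset\mathbb C$ with (i) $\alpha_{1_{\mathbf f}}=1$; (ii) $\alpha_{\{\{1\},\{2\}\}}=1$ for every $\mathbf f\in\mathcal F^2$; (iii) $\alpha_\pi=\alpha_{\pi_{\mathrm{red}}}$; (iv) if $\pi\in\mathcal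 P(\mathbf f)$ has blocks $\beta_1\ne\beta_2$ with $i\in\beta_1$, $i+1\in\beta_2$, $\mathbf f(i)=\mathbf f(i+1)$, then $\alpha_\pi=\alpha_{\pi_{\beta_1\smile\beta_2}}\alpha_{\{\beta_1,\beta_2\}}$; (v) $\alpha_\pi=\alpha_\sigma$ whenever $\pi\in\mathcal P(\mathbf f)$, $\sigma\in\mathcal P(\mathbf g)$ have the same set partition and $\mathbf f(\ell)=\mathbf g(\ell)$ for $1<\ell<n$; (vi) $\alpha_{\overline\pi}=\overline{\alpha_\pi}$. Basic coefficients (faces of first and last leg arbitrary, irrelevant by (v)): $\nu_{\mathsf q}=\alpha_\pi$ for $\pi=\{\{1,3\},\{2\}\}$ with $\mathbf f(2)=\mathsf q$; $\xi_{\mathsf q}=\alpha_\pi$ for $\pi=\{\{1,3\},\{2,4\}\}$ with $\mathbf f(2)=\mathbf f(3)=\mathsf q$; $\nu_{\mathsf q\mathsf Q}=\alpha_\pi$ for $\pi=\{\{1,4\},\{2,3\}\}$ with $\mathbf f(2)=\mathsf q$, $\mathbf f(3)=\mathsf Q$; $\xi_{\mathsf q\mathsf Q}=\alpha_\pi$ for $\pi=\{\{1,3\},\{2,4\}\}$ with $\mathbf f(2)=\mathsf q$, $\mathbf f(3)=\mathsf Q$. *)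

(* Defs.v *)
From mathcomp Require Import all_boot all_algebra.
From mathcomp Require Import complex.
From mathcomp Require Import Rstruct.
Import GRing.Theory Num.Theory.
Set Implicit Arguments. Unset Strict Implicit. Unset Printing Implicit Defensive.
Local Open Scope ring_scope.

Definition Cplx : Type := (Rdefinitions.R)[i].

Section Admissible.
Variable F : finType.

(* A family of weights: alpha n f P for a word f of length n and a set
   partition P of [n] = 'I_n (0-based legs). Only values on genuine set
   partitions with n >= 1 matter. *)
Definition weights := forall n : nat, {ffun 'I_n -> F} -> {set {set 'I_n}} -> Cplx.

Definition valid_part n (P : {set {set 'I_n}}) := (0 < n)%N && partition P [set: 'I_n].

Definition same_block n (P : {set {set 'I_n}}) (i j : 'I_n) := pblock P i == pblock P j.

(* (Q on [m] with word g) is the reduction of (P on [n] with word f), witnessed by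
   the (necessarily unique) monotone surjection c : [n] -> [n]/~ = [m]. *)
Definition is_reduction n (f : {ffun 'I_n -> F}) (P : {set {set 'I_n}})
    m (g : {ffun 'I_m -> F}) (Q : {set {set 'I_m}}) (c : 'I_n -> 'I_m) :=
  [/\ forall i j : 'I_n, (i <= j)%N -> (c i <= c j)%N,
      forall k : 'I_m, exists i, c i = k,
      forall i j : 'I_n, (i <= j)%N ->
        (c i = c j <-> forall r : 'I_n, (i <= r <= j)%N -> f r = f i /\ same_block P r i),
      forall i, g (c i) = f i
    & Q = [set c @: B | B : {set 'I_n} in P]].

Definition merge_blocks n (P : {set {set 'I_n}}) (B1 B2 : {set 'I_n}) :=
  (P :\ B1 :\ B2) :|: [set B1 :|: B2].

Definition admissible (alpha : weights) : Prop :=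
  [/\ forall n (f : {ffun 'I_n.+1 -> F}), alpha n.+1 f [set [set: 'I_n.+1]] = 1,
      forall f : {ffun 'I_2 -> F},
        alpha 2 f [set [set (@ord0 1)]; [set (@ord_max 1)]] = 1,
      forall n (f : {ffun 'I_n -> F}) P, valid_part P ->
        forall m g Q (c : 'I_n -> 'I_m), is_reduction f P g Q c -> alpha n f P = alpha m g Q,
      forall n (f : {ffun 'I_n -> F}) P (B1 B2 : {set 'I_n}) (i j : 'I_n), valid_part P ->
        B1 \in P -> B2 \in P -> B1 != B2 -> i \in B1 -> j \in B2 -> val j = (val i).+1 ->
        f i = f j ->
        forall m (e : 'I_m -> 'I_n), (forall k l : 'I_m, (k < l)%N -> (e k < e l)%N) ->
          [set e k | k : 'I_m] = B1 :|: B2 ->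
          alpha n f P = alpha n f (merge_blocks P B1 B2) *
                        alpha m [ffun k => f (e k)] [set e @^-1: B1; e @^-1: B2]
    & (forall n (f g : {ffun 'I_n -> F}) P, valid_part P ->
        (forall l : 'I_n, (0 < l < n.-1)%N -> f l = g l) -> alpha n f P = alpha n g P)
    /\ (forall n (f : {ffun 'I_n -> F}) P, valid_part P ->
        alpha n [ffun i => f (@rev_ord n i)] [set (@rev_ord n) @: B | B : {set 'I_n} in P]
        = (alpha n f P)^*)].

(* Basic coefficients (legs 0-based; first and last faces chosen arbitrarily). *)
Definition o3 (k : nat) : 'I_3 := inord k.
Definition o4 (k : nat) : 'I_4 := inord k.
Definition word4 (q Q : F) : {ffun 'I_4 -> F} := [ffun i : 'I_4 => if (i < 2)%N then q else Q].

Definition nu1 (alpha : weights) (q : F) : Cplx :=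
  alpha 3 [ffun _ => q] [set [set o3 0; o3 2]; [set o3 1]].
Definition xi1 (alpha : weights) (q : F) : Cplx :=
  alpha 4 [ffun _ => q] [set [set o4 0; o4 2]; [set o4 1; o4 3]].
Definition nu2 (alpha : weights) (q Q : F) : Cplx :=
  alpha 4 (word4 q Q) [set [set o4 0; o4 3]; [set o4 1; o4 2]].
Definition xi2 (alpha : weights) (q Q : F) : Cplx :=
  alpha 4 (word4 q Q) [set [set o4 0; o4 2]; [set o4 1; o4 3]].

End Admissible.

(* Main.v *)
Require Import Defs.
From mathcomp Require Import all_boot all_algebra.
From mathcomp Require Import complex.
From mathcomp Require Import Rstruct.
Import GRing.Theory Num.Theory.
Unset Implicit Arguments. Unset Strict Implicit. Unset Printing Implicit Defensive.

Section Gen.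
Variables (F : finType) (alpha : weights F) (q Q : F).
Hypothesis Hadm : admissible alpha.

Definition sel (b : bool) : F := if b then Q else q.
Definition wf (ws : seq bool) (n : nat) : {ffun 'I_n -> F} :=
  [ffun i : 'I_n => sel (nth false ws i)].
Definition lab (ls : seq nat) {n : nat} (i : 'I_n) : nat := nth 0 ls i.
Definition pp (ls : seq nat) (n : nat) : {set {set 'I_n}} :=
  preim_partition (lab ls (n:=n)) [set: 'I_n].
Definition feq (e b1 b2 : bool) := (b1 == b2) || e.
Arguments wf ws n : clear implicits.
Arguments pp ls n : clear implicits.

Lemma selE e : (q == Q) = e -> forall b1 b2, (sel b1 == sel b2) = feq e b1 b2.
Proof. by move=> <- [] [] //=; rewrite /feq /= ?eqxx // eq_sym. Qed.

Lemma memI {n} (i : 'I_n) : (i : nat) \in iota 0 n.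
Proof. by rewrite mem_iota ltn_ord. Qed.

Lemma pp_valid ls {n} : 0 < n -> valid_part (pp ls n).
Proof. by move=> n0; rewrite /valid_part n0 preim_partitionP. Qed.

Lemma pp_eqi ls n : {in [set: 'I_n] & &, equivalence_rel (fun x y => lab ls x == lab ls y)}.
Proof. by move=> x y z _ _ _; split=> // /eqP->. Qed.

Lemma pblock_pp ls n (x : 'I_n) :
  pblock (pp ls n) x = [set y | lab ls x == lab ls y].
Proof.
apply/setP=> y; rewrite inE.
by rewrite (@pblock_equivalence_partition _ _ _ (@pp_eqi ls n)) ?inE.
Qed.

Lemma same_block_pp ls n (r i : 'I_n) :
  same_block (pp ls n) r i = (lab ls r == lab ls i).
Proof.
have [_ ti _] := and3P (preim_partitionP (lab ls (n:=n)) [set: 'I_n]).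
rewrite /same_block eq_pblock //; last first.
  by move: (preim_partitionP (lab ls (n:=n)) [set: 'I_n]) => /and3P[/eqP -> _ _].
by rewrite pblock_pp inE eq_sym.
Qed.

Lemma ppP ls n B :
  reflect (exists x : 'I_n, B = [set y | lab ls x == lab ls y]) (B \in pp ls n).
Proof.
apply: (iffP imsetP) => [[x _ ->]|[x ->]]; exists x => //;
  by apply/setP=> y; rewrite !inE.
Qed.

Lemma pp_char ls n (S : {set {set 'I_n}}) :
  (forall x : 'I_n, [set y | lab ls x == lab ls y] \in S) ->
  (forall B, B \in S -> exists x : 'I_n, B = [set y | lab ls x == lab ls y]) ->
  pp ls n = S.
Proof.
move=> h1 h2; apply/setP=> B; apply/ppP/idP => [[x ->]//|/h2//].
Qed.

Lemma imset_pp ls n ls' m (c : 'I_n -> 'I_m) :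
  (forall k : 'I_m, exists i, c i = k) ->
  (forall i j, (lab ls' (c i) == lab ls' (c j)) = (lab ls i == lab ls j)) ->
  [set c @: B | B : {set 'I_n} in pp ls n] = pp ls' m.
Proof.
move=> surj hc.
have key x : c @: [set y | lab ls x == lab ls y]
           = [set y | lab ls' (c x) == lab ls' y].
  apply/setP=> y; apply/imsetP/idP => [[z]|]; rewrite ?inE.
  - by move=> hz ->; rewrite hc.
  - by case: (surj y) => z <- h; exists z; rewrite // inE -hc.
apply/setP=> B; apply/imsetP/ppP => [[B0 /ppP[x ->] ->]|[y ->]].
  by exists (c x); rewrite key.
case: (surj y) => x <-; exists [set z | lab ls x == lab ls z]; last by rewrite key.
by apply/ppP; exists x.
Qed.

Lemma pp_eq ls ls' n :
  (forall i j : 'I_n, (lab ls' i == lab ls' j) = (lab ls i == lab ls j)) ->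
  pp ls n = pp ls' n.
Proof.
move=> h; rewrite -(@imset_pp ls n ls' n id) //; last by move=> k; exists k.
by apply/setP=> B; apply/idP/imsetP => [hB|[B0 hB0 ->]]; [exists B; rewrite ?imset_id | rewrite imset_id].
Qed.


Definition red_check (e : bool) (n m : nat) (ls : seq nat) (ws : seq bool)
    (ls' : seq nat) (ws' : seq bool) (cs : seq nat) : bool :=
  let c i := nth 0 cs i in
  let I := iota 0 n in
  [&& all (fun i => c i < m) I,
      all (fun k => has (fun i => c i == k) I) (iota 0 m),
      all (fun i => all (fun j => (i <= j) ==> ((c i <= c j) &&
          ((c i == c j) == all (fun r => ((i <= r) && (r <= j)) ==>
              (feq e (nth false ws r) (nth false ws i) && (nth 0 ls r == nth 0 ls i))) I))) I) I,
      all (fun i => feq e (nth false ws' (c i)) (nth false ws i)) I &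
      all (fun i => all (fun j => (nth 0 ls' (c i) == nth 0 ls' (c j)) == (nth 0 ls i == nth 0 ls j)) I) I].

Lemma L_red e n m ls ws ls' ws' cs : (q == Q) = e -> 0 < n ->
  red_check e n m.+1 ls ws ls' ws' cs ->
  alpha n (wf ws n) (pp ls n) = alpha m.+1 (wf ws' m.+1) (pp ls' m.+1).
Proof.
move=> He n0 /and5P[h0 h1 h2 h3 h4].
case: Hadm => _ _ H3 _ _.
pose c (i : 'I_n) : 'I_m.+1 := inord (nth 0 cs i).
have cE i : (c i : nat) = nth 0 cs i by rewrite inordK // (allP h0 _ (memI i)).
have surj : forall k : 'I_m.+1, exists i, c i = k.
  move=> k; case/hasP: (allP h1 k (memI k)) => i.
  rewrite mem_iota add0n => /andP[_ iN] /eqP ck.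
  by exists (Ordinal iN); apply/val_inj; rewrite /= cE.
apply: (H3 _ _ _ (pp_valid ls n0) _ _ _ c); split.
- move=> i j ij; rewrite !cE.
  by have := allP (allP h2 _ (memI i)) _ (memI j); rewrite ij /= => /andP[].
- exact: surj.
- move=> i j ij.
  have := allP (allP h2 _ (memI i)) _ (memI j); rewrite ij /= => /andP[_ /eqP H].
  split.
  + move=> /(congr1 val); rewrite /= !cE => /eqP; rewrite H => /allP hall r /andP[ir rj].
    have := hall r (memI r); rewrite ir rj /= => /andP[hf hl].
    split; first by rewrite !ffunE; apply/eqP; rewrite (selE _ He).
    by rewrite same_block_pp.
  + move=> hall; apply/val_inj; rewrite /= !cE; apply/eqP; rewrite H.
    apply/allP => r; rewrite mem_iota add0n => /andP[_ rn]; apply/implyP => /andP[ir rj].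
    have [hf hs] := hall (Ordinal rn) (ltac:(by rewrite /= ir rj)).
    move: hf; rewrite !ffunE /= => /eqP; rewrite (selE _ He) => ->.
    by move: hs; rewrite same_block_pp.
- by move=> i; rewrite !ffunE cE; apply/eqP; rewrite (selE _ He) (allP h3 _ (memI i)).
- symmetry; apply: imset_pp => // i j; rewrite /lab !cE.
  by have := allP (allP h4 _ (memI i)) _ (memI j); move/eqP.
Qed.

Definition ends_check (e : bool) (n : nat) (ws ws' : seq bool) : bool :=
  all (fun l => ((0 < l) && (l < n.-1)) ==> feq e (nth false ws l) (nth false ws' l)) (iota 0 n).

Lemma L_ends e n ls ws ws' : (q == Q) = e -> 0 < n -> ends_check e n ws ws' ->
  alpha n (wf ws n) (pp ls n) = alpha n (wf ws' n) (pp ls n).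
Proof.
move=> He n0 h; case: Hadm => _ _ _ _ [H5 _].
apply: H5; first exact: pp_valid.
move=> l hl; rewrite !ffunE; apply/eqP; rewrite (selE _ He).
by have := allP h _ (memI l); rewrite hl.
Qed.

Definition mir_check (n : nat) (ls : seq nat) (ws : seq bool) (ls' : seq nat) (ws' : seq bool) :=
  all (fun i => (nth 0 ls' (n - i.+1) == nth 0 ls i) && (nth false ws' i == nth false ws (n - i.+1)))
    (iota 0 n).

Lemma L_mir n ls ws ls' ws' : 0 < n -> mir_check n ls ws ls' ws' ->
  alpha n (wf ws' n) (pp ls' n) = (alpha n (wf ws n) (pp ls n))^*%R.
Proof.
move=> n0 h; case: Hadm => _ _ _ _ [_ H6].
rewrite -(H6 _ _ _ (pp_valid ls n0)); congr (alpha n _ _).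
- apply/ffunP=> i; rewrite !ffunE /=; congr sel.
  by have /andP[_ /eqP] := allP h _ (memI i).
- symmetry; apply: imset_pp.
  + by move=> k; exists (rev_ord k); rewrite rev_ordK.
  + move=> i j; rewrite /lab /=.
    have /andP[/eqP -> _] := allP h _ (memI i).
    by have /andP[/eqP -> _] := allP h _ (memI j).
Qed.


Definition merge_check (e : bool) (n : nat) (ls : seq nat) (ws : seq bool) (i : nat)
    (lsM idx lsP : seq nat) (wsP : seq bool) (m : nat) : bool :=
  let a := nth 0 ls i in let b := nth 0 ls i.+1 in
  let l k := nth 0 ls k in
  let inab k := (a == l k) || (b == l k) in
  [&& i.+1 < n, a != b, feq e (nth false ws i) (nth false ws i.+1) &
  [&& idx == filter inab (iota 0 n), size idx == m,
      all (fun y => all (fun z => (nth 0 lsM y == nth 0 lsM z) ==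
          ((l y == l z) || (inab y && inab z))) (iota 0 n)) (iota 0 n) &
      all (fun k => all (fun k' => (nth 0 lsP k == nth 0 lsP k') ==
          (l (nth 0 idx k) == l (nth 0 idx k'))) (iota 0 m)) (iota 0 m) &&
      all (fun k => nth false wsP k == nth false ws (nth 0 idx k)) (iota 0 m)]].

Lemma L_merge e n ls ws i lsM idx lsP wsP m : (q == Q) = e ->
  merge_check e n ls ws i lsM idx lsP wsP m ->
  alpha n (wf ws n) (pp ls n)
  = (alpha n (wf ws n) (pp lsM n) * alpha m (wf wsP m) (pp lsP m))%R.
Proof.
move=> He /and4P[hi hab hf /and4P[/eqP hidx /eqP hm hM /andP[hP hW]]].
case: Hadm => _ _ _ H4 _.
have iN : i < n := ltnW hi.
have n0 : 0 < n := leq_ltn_trans (leq0n i) iN.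
pose i0 : 'I_n := Ordinal iN. pose j0 : 'I_n := Ordinal hi.
pose B1 := [set y : 'I_n | lab ls i0 == lab ls y].
pose B2 := [set y : 'I_n | lab ls j0 == lab ls y].
pose e0 (k : 'I_m) : 'I_n := insubd i0 (nth 0 idx k).
have idx_lt k : k < m -> nth 0 idx k < n.
  move=> km; have : nth 0 idx k \in idx by rewrite mem_nth // hm.
  by rewrite hidx mem_filter mem_iota add0n => /andP[_ /andP[]].
have eE k : (e0 k : nat) = nth 0 idx k by rewrite val_insubd idx_lt.
have inabE (y : 'I_n) : (y \in B1 :|: B2) = ((y : nat) \in idx).
  by rewrite hidx mem_filter mem_iota add0n ltn_ord !inE /lab /= andbT.
have V : valid_part (pp ls n) := pp_valid ls n0.
have PB1 : B1 \in pp ls n by apply/ppP; exists i0.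
have PB2 : B2 \in pp ls n by apply/ppP; exists j0.
have neq : B1 != B2.
  apply/negP => /eqP E; have : j0 \in B2 by rewrite inE.
  by rewrite -E inE /lab /= (negbTE hab).
have i0B1 : i0 \in B1 by rewrite inE.
have j0B2 : j0 \in B2 by rewrite inE.
have fij : wf ws n i0 = wf ws n j0 by rewrite !ffunE; apply/eqP; rewrite (selE _ He).
have mono : forall k l : 'I_m, k < l -> e0 k < e0 l.
  move=> k l kl; rewrite !eE.
  have so : sorted ltn idx by rewrite hidx; apply: sorted_filter; [exact: ltn_trans|exact: iota_ltn_sorted].
  by apply: (sorted_ltn_nth ltn_trans) => //; rewrite inE hm.
have img : [set e0 k | k : 'I_m] = B1 :|: B2.
  apply/setP => y; rewrite inabE; apply/imsetP/idP => [[k _ ->]|yin].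
    by rewrite eE mem_nth // hm.
  have km : index (y : nat) idx < m by rewrite -hm index_mem.
  by exists (Ordinal km) => //; apply: val_inj; rewrite /= eE /= nth_index.
rewrite (H4 n (wf ws n) (pp ls n) B1 B2 i0 j0 V PB1 PB2 neq i0B1 j0B2 erefl fij m e0 mono img).
have hMe (y z : 'I_n) : (lab lsM y == lab lsM z)
    = ((lab ls y == lab ls z) || ((y \in B1 :|: B2) && (z \in B1 :|: B2))).
  rewrite !inE /lab /=; by have := allP (allP hM _ (memI y)) _ (memI z); move/eqP.
have hPe (k k' : 'I_m) : (lab lsP k == lab lsP k') = (lab ls (e0 k) == lab ls (e0 k')).
  rewrite /lab !eE; by have := allP (allP hP _ (memI k)) _ (memI k'); move/eqP.
have eB k : e0 k \in B1 :|: B2 by rewrite -img; apply/imsetP; exists k.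
congr (alpha n _ _ * alpha m _ _)%R.
- symmetry; apply: pp_char.
  + move=> x; rewrite /merge_blocks !inE.
    case hx: (x \in B1 :|: B2).
    * apply/orP; right; apply/eqP; apply/setP => y; rewrite inE hMe hx /=.
      case E: (lab ls x == lab ls y) => //=.
      by move: hx; rewrite !inE (eqP E).
    * have E : [set y : 'I_n | lab lsM x == lab lsM y] = [set y : 'I_n | lab ls x == lab ls y].
        by apply/setP => y; rewrite !inE hMe hx /= orbF.
      have xin : x \in [set y : 'I_n | lab ls x == lab ls y] by rewrite inE.
      rewrite E; apply/orP; left; apply/and3P; split.
      - by apply/eqP => h; move: hx; rewrite -h in_setU xin orbT.
      - by apply/eqP => h; move: hx; rewrite -h in_setU xin.
      - by apply/ppP; exists x.
  + move=> B; rewrite /merge_blocks !inE => /orP[/and3P[nB2 nB1 /ppP[x EB]]|/eqP ->].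
    * exists x; rewrite EB.
      have hx : (x \in B1 :|: B2) = false.
        apply/negP; rewrite !inE => /orP[] /eqP hx.
        - by move: nB1; rewrite EB; case/eqP; apply/setP => y; rewrite !inE hx.
        - by move: nB2; rewrite EB; case/eqP; apply/setP => y; rewrite !inE hx.
      by apply/setP => y; rewrite !inE hMe hx /= orbF.
    * have i0U : i0 \in B1 :|: B2 by rewrite in_setU i0B1.
      exists i0; apply/setP => y; rewrite [in RHS]inE hMe i0U /=.
      by rewrite !inE orbA orbb.
- apply/ffunP => k; rewrite !ffunE eE; congr sel.
  by rewrite (eqP (allP hW _ (memI k))).
- have: i0 \in [set e0 k | k : 'I_m] by rewrite img inE i0B1.
  case/imsetP => k1 _ ek1.
  have: j0 \in [set e0 k | k : 'I_m] by rewrite img inE j0B2 orbT.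
  case/imsetP => k2 _ ek2.
  symmetry; apply: pp_char.
  + move=> x; rewrite !inE.
    have := eB x; rewrite inE => /orP[] h.
    * apply/orP; left; apply/eqP; apply/setP => y; rewrite !inE hPe.
      by move: h; rewrite inE => /eqP ->.
    * apply/orP; right; apply/eqP; apply/setP => y; rewrite !inE hPe.
      by move: h; rewrite inE => /eqP ->.
  + move=> B; rewrite !inE => /orP[] /eqP ->.
    * by exists k1; apply/setP => y; rewrite !inE hPe -ek1.
    * by exists k2; apply/setP => y; rewrite !inE hPe -ek2.
Qed.


Lemma o3E (x : 'I_3) k : k < 3 -> (x == o3 k) = (x == k :> nat).
Proof. by move=> hk; rewrite /o3 -val_eqE /= inordK. Qed.
Lemma o4E (x : 'I_4) k : k < 4 -> (x == o4 k) = (x == k :> nat).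
Proof. by move=> hk; rewrite /o4 -val_eqE /= inordK. Qed.

Ltac oc y := case: y => [[|[|[|[|[|[|[|[|?]]]]]]]] //= ?].

Lemma nu1E : nu1 alpha q = alpha 3 (wf [::false;false;false] 3) (pp [::0;1;0] 3).
Proof.
rewrite /nu1; congr (alpha 3 _ _).
- by apply/ffunP => i; rewrite !ffunE; oc i.
- symmetry; apply: pp_char.
  + move=> x; rewrite !inE; oc x; apply/orP; [left|right|left]; apply/eqP; apply/setP => y;
    rewrite !inE ?o3E //; oc y.
  + move=> B; rewrite !inE => /orP[]/eqP ->; [exists ord0 | exists (@Ordinal 3 1 isT)];
    apply/setP => y; rewrite !inE ?o3E //; oc y.
Qed.


Lemma xi1E : xi1 alpha q = alpha 4 (wf [::false;false;false;false] 4) (pp [::0;1;0;1] 4).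
Proof.
rewrite /xi1; congr (alpha 4 _ _).
- by apply/ffunP => i; rewrite !ffunE; oc i.
- symmetry; apply: pp_char.
  + move=> x; rewrite !inE; oc x; apply/orP; [left|right|left|right]; apply/eqP; apply/setP => y;
    rewrite !inE ?o4E //; oc y.
  + move=> B; rewrite !inE => /orP[]/eqP ->; [exists ord0 | exists (@Ordinal 4 1 isT)];
    apply/setP => y; rewrite !inE ?o4E //; oc y.
Qed.

Lemma nu2E : nu2 alpha q Q = alpha 4 (wf [::false;false;true;true] 4) (pp [::0;1;1;0] 4).
Proof.
rewrite /nu2; congr (alpha 4 _ _).
- by apply/ffunP => i; rewrite !ffunE; oc i.
- symmetry; apply: pp_char.
  + move=> x; rewrite !inE; oc x; apply/orP; [left|right|right|left]; apply/eqP; apply/setP => y;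
    rewrite !inE ?o4E //; oc y.
  + move=> B; rewrite !inE => /orP[]/eqP ->; [exists ord0 | exists (@Ordinal 4 1 isT)];
    apply/setP => y; rewrite !inE ?o4E //; oc y.
Qed.

Lemma xi2E : xi2 alpha q Q = alpha 4 (wf [::false;false;true;true] 4) (pp [::0;1;0;1] 4).
Proof.
rewrite /xi2; congr (alpha 4 _ _).
- by apply/ffunP => i; rewrite !ffunE; oc i.
- symmetry; apply: pp_char.
  + move=> x; rewrite !inE; oc x; apply/orP; [left|right|left|right]; apply/eqP; apply/setP => y;
    rewrite !inE ?o4E //; oc y.
  + move=> B; rewrite !inE => /orP[]/eqP ->; [exists ord0 | exists (@Ordinal 4 1 isT)];
    apply/setP => y; rewrite !inE ?o4E //; oc y.
Qed.

Lemma L_two ws : alpha 2 (wf ws 2) (pp [::0;1] 2) = 1%R.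
Proof.
case: Hadm => _ H2 _ _ _; rewrite -(H2 (wf ws 2)); congr (alpha 2 _ _).
apply: pp_char.
+ move=> x; rewrite !inE; oc x; apply/orP; [left|right]; apply/eqP; apply/setP => y;
  rewrite !inE //; oc y.
+ move=> B; rewrite !inE => /orP[]/eqP ->; [exists ord0 | exists (@Ordinal 2 1 isT)];
  apply/setP => y; rewrite !inE //; oc y.
Qed.


Lemma R0_0 (e : bool) (He : (q == Q) = e) :
  alpha 4 (wf [::false;false;false;false] 4) (pp [::0;1;2;0] 4) = (alpha 3 (wf [::false;false;false] 3) (pp [::0;1;0] 3) * alpha 3 (wf [::false;false;false] 3) (pp [::0;1;0] 3))%R.
Proof.
rewrite (@L_merge e 4 [::0;1;2;0] [::false;false;false;false] 0 [::0;0;1;0] [::0;1;3] [::0;1;0] [::false;false;false] 3 He isT);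
  rewrite ?(@L_red e 4 2 [::0;0;1;0] [::false;false;false;false] [::0;1;0] [::false;false;false] [::0;0;1;2] He isT isT);
  rewrite ?L_two ?mul1r ?mulr1; try reflexivity.
Qed.

Lemma R0_1 (e : bool) (He : (q == Q) = e) :
  alpha 4 (wf [::false;false;false;false] 4) (pp [::0;1;2;0] 4) = (alpha 3 (wf [::false;false;false] 3) (pp [::0;1;0] 3) * 1)%R.
Proof.
rewrite (@L_merge e 4 [::0;1;2;0] [::false;false;false;false] 1 [::0;1;1;0] [::1;2] [::0;1] [::false;false] 2 He isT);
  rewrite ?(@L_red e 4 2 [::0;1;1;0] [::false;false;false;false] [::0;1;0] [::false;false;false] [::0;1;1;2] He isT isT);
  rewrite ?L_two ?mul1r ?mulr1; try reflexivity.
Qed.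

Lemma R0_2 (e : bool) (He : (q == Q) = e) :
  alpha 4 (wf [::false;false;false;false] 4) (pp [::0;1;2;0] 4) = (alpha 3 (wf [::false;false;false] 3) (pp [::0;1;0] 3) * alpha 3 (wf [::false;false;false] 3) (pp [::0;1;0] 3))%R.
Proof.
rewrite (@L_merge e 4 [::0;1;2;0] [::false;false;false;false] 2 [::0;1;0;0] [::0;2;3] [::0;1;0] [::false;false;false] 3 He isT);
  rewrite ?(@L_red e 4 2 [::0;1;0;0] [::false;false;false;false] [::0;1;0] [::false;false;false] [::0;1;2;2] He isT isT);
  rewrite ?L_two ?mul1r ?mulr1; try reflexivity.
Qed.

Lemma R1_0 (e : bool) (He : (q == Q) = e) :
  alpha 5 (wf [::false;false;false;false;false] 5) (pp [::0;1;0;2;1] 5) = (alpha 3 (wf [::false;false;false] 3) (pp [::0;1;0] 3) * alpha 4 (wf [::false;false;false;false] 4) (pp [::0;1;0;1] 4))%R.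
Proof.
rewrite (@L_merge e 5 [::0;1;0;2;1] [::false;false;false;false;false] 0 [::0;0;0;1;0] [::0;1;2;4] [::0;1;0;1] [::false;false;false;false] 4 He isT);
  rewrite ?(@L_red e 5 2 [::0;0;0;1;0] [::false;false;false;false;false] [::0;1;0] [::false;false;false] [::0;0;0;1;2] He isT isT);
  rewrite ?L_two ?mul1r ?mulr1; try reflexivity.
Qed.

Lemma R1_1 (e : bool) (He : (q == Q) = e) :
  alpha 5 (wf [::false;false;false;false;false] 5) (pp [::0;1;0;2;1] 5) = (alpha 3 (wf [::false;false;false] 3) (pp [::0;1;0] 3) * alpha 4 (wf [::false;false;false;false] 4) (pp [::0;1;0;1] 4))%R.
Proof.
rewrite (@L_merge e 5 [::0;1;0;2;1] [::false;false;false;false;false] 1 [::0;0;0;1;0] [::0;1;2;4] [::0;1;0;1] [::false;false;false;false] 4 He isT);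
  rewrite ?(@L_red e 5 2 [::0;0;0;1;0] [::false;false;false;false;false] [::0;1;0] [::false;false;false] [::0;0;0;1;2] He isT isT);
  rewrite ?L_two ?mul1r ?mulr1; try reflexivity.
Qed.

Lemma R1_2 (e : bool) (He : (q == Q) = e) :
  alpha 5 (wf [::false;false;false;false;false] 5) (pp [::0;1;0;2;1] 5) = (alpha 4 (wf [::false;false;false;false] 4) (pp [::0;1;0;1] 4) * 1)%R.
Proof.
rewrite (@L_merge e 5 [::0;1;0;2;1] [::false;false;false;false;false] 2 [::0;1;0;0;1] [::0;2;3] [::0;0;1] [::false;false;false] 3 He isT);
  rewrite ?(@L_red e 5 3 [::0;1;0;0;1] [::false;false;false;false;false] [::0;1;0;1] [::false;false;false;false] [::0;1;2;2;3] He isT isT);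
  rewrite ?(@L_red e 3 1 [::0;0;1] [::false;false;false] [::0;1] [::false;false] [::0;0;1] He isT isT);
  rewrite ?L_two ?mul1r ?mulr1; try reflexivity.
Qed.

Lemma R1_3 (e : bool) (He : (q == Q) = e) :
  alpha 5 (wf [::false;false;false;false;false] 5) (pp [::0;1;0;2;1] 5) = (alpha 4 (wf [::false;false;false;false] 4) (pp [::0;1;0;1] 4) * alpha 3 (wf [::false;false;false] 3) (pp [::0;1;0] 3))%R.
Proof.
rewrite (@L_merge e 5 [::0;1;0;2;1] [::false;false;false;false;false] 3 [::0;1;0;1;1] [::1;3;4] [::0;1;0] [::false;false;false] 3 He isT);
  rewrite ?(@L_red e 5 3 [::0;1;0;1;1] [::false;false;false;false;false] [::0;1;0;1] [::false;false;false;false] [::0;1;2;3;3] He isT isT);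
  rewrite ?L_two ?mul1r ?mulr1; try reflexivity.
Qed.

Lemma R2_0 (e : bool) (He : (q == Q) = e) :
  alpha 6 (wf [::false;false;false;false;false;false] 6) (pp [::0;1;2;0;2;1] 6) = (alpha 5 (wf [::false;false;false;false;false] 5) (pp [::0;1;0;1;0] 5) * alpha 4 (wf [::false;false;false;false] 4) (pp [::0;1;0;1] 4))%R.
Proof.
rewrite (@L_merge e 6 [::0;1;2;0;2;1] [::false;false;false;false;false;false] 0 [::0;0;1;0;1;0] [::0;1;3;5] [::0;1;0;1] [::false;false;false;false] 4 He isT);
  rewrite ?(@L_red e 6 4 [::0;0;1;0;1;0] [::false;false;false;false;false;false] [::0;1;0;1;0] [::false;false;false;false;false] [::0;0;1;2;3;4] He isT isT);
  rewrite ?L_two ?mul1r ?mulr1; try reflexivity.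
Qed.

Lemma R2_1 (e : bool) (He : (q == Q) = e) :
  alpha 6 (wf [::false;false;false;false;false;false] 6) (pp [::0;1;2;0;2;1] 6) = (alpha 4 (wf [::false;false;false;false] 4) (pp [::0;1;0;1] 4) * alpha 3 (wf [::false;false;false] 3) (pp [::0;1;0] 3))%R.
Proof.
rewrite (@L_merge e 6 [::0;1;2;0;2;1] [::false;false;false;false;false;false] 1 [::0;1;1;0;1;1] [::1;2;4;5] [::0;1;1;0] [::false;false;false;false] 4 He isT);
  rewrite ?(@L_red e 6 3 [::0;1;1;0;1;1] [::false;false;false;false;false;false] [::0;1;0;1] [::false;false;false;false] [::0;1;1;2;3;3] He isT isT);
  rewrite ?(@L_red e 4 2 [::0;1;1;0] [::false;false;false;false] [::0;1;0] [::false;false;false] [::0;1;1;2] He isT isT);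
  rewrite ?L_two ?mul1r ?mulr1; try reflexivity.
Qed.

Lemma R2_2 (e : bool) (He : (q == Q) = e) :
  alpha 6 (wf [::false;false;false;false;false;false] 6) (pp [::0;1;2;0;2;1] 6) = (alpha 4 (wf [::false;false;false;false] 4) (pp [::0;1;0;1] 4) * alpha 4 (wf [::false;false;false;false] 4) (pp [::0;1;0;1] 4))%R.
Proof.
rewrite (@L_merge e 6 [::0;1;2;0;2;1] [::false;false;false;false;false;false] 2 [::0;1;0;0;0;1] [::0;2;3;4] [::0;1;0;1] [::false;false;false;false] 4 He isT);
  rewrite ?(@L_red e 6 3 [::0;1;0;0;0;1] [::false;false;false;false;false;false] [::0;1;0;1] [::false;false;false;false] [::0;1;2;2;2;3] He isT isT);
  rewrite ?L_two ?mul1r ?mulr1; try reflexivity.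
Qed.

Lemma R2_3 (e : bool) (He : (q == Q) = e) :
  alpha 6 (wf [::false;false;false;false;false;false] 6) (pp [::0;1;2;0;2;1] 6) = (alpha 4 (wf [::false;false;false;false] 4) (pp [::0;1;0;1] 4) * alpha 4 (wf [::false;false;false;false] 4) (pp [::0;1;0;1] 4))%R.
Proof.
rewrite (@L_merge e 6 [::0;1;2;0;2;1] [::false;false;false;false;false;false] 3 [::0;1;0;0;0;1] [::0;2;3;4] [::0;1;0;1] [::false;false;false;false] 4 He isT);
  rewrite ?(@L_red e 6 3 [::0;1;0;0;0;1] [::false;false;false;false;false;false] [::0;1;0;1] [::false;false;false;false] [::0;1;2;2;2;3] He isT isT);
  rewrite ?L_two ?mul1r ?mulr1; try reflexivity.
Qed.

Lemma R2_4 (e : bool) (He : (q == Q) = e) :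
  alpha 6 (wf [::false;false;false;false;false;false] 6) (pp [::0;1;2;0;2;1] 6) = (alpha 4 (wf [::false;false;false;false] 4) (pp [::0;1;0;1] 4) * alpha 3 (wf [::false;false;false] 3) (pp [::0;1;0] 3))%R.
Proof.
rewrite (@L_merge e 6 [::0;1;2;0;2;1] [::false;false;false;false;false;false] 4 [::0;1;1;0;1;1] [::1;2;4;5] [::0;1;1;0] [::false;false;false;false] 4 He isT);
  rewrite ?(@L_red e 6 3 [::0;1;1;0;1;1] [::false;false;false;false;false;false] [::0;1;0;1] [::false;false;false;false] [::0;1;1;2;3;3] He isT isT);
  rewrite ?(@L_red e 4 2 [::0;1;1;0] [::false;false;false;false] [::0;1;0] [::false;false;false] [::0;1;1;2] He isT isT);
  rewrite ?L_two ?mul1r ?mulr1; try reflexivity.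
Qed.

Lemma R3_0 (He : (q == Q) = false) :
  alpha 5 (wf [::false;false;false;true;false] 5) (pp [::0;1;2;2;0] 5) = (alpha 4 (wf [::false;false;true;false] 4) (pp [::0;1;1;0] 4) * alpha 3 (wf [::false;false;false] 3) (pp [::0;1;0] 3))%R.
Proof.
rewrite (@L_merge false 5 [::0;1;2;2;0] [::false;false;false;true;false] 0 [::0;0;1;1;0] [::0;1;4] [::0;1;0] [::false;false;false] 3 He isT);
  rewrite ?(@L_red false 5 3 [::0;0;1;1;0] [::false;false;false;true;false] [::0;1;1;0] [::false;false;true;false] [::0;0;1;2;3] He isT isT);
  rewrite ?L_two ?mul1r ?mulr1; try reflexivity.
Qed.

Lemma R3_1 (He : (q == Q) = false) :
  alpha 5 (wf [::false;false;false;true;false] 5) (pp [::0;1;2;2;0] 5) = (alpha 4 (wf [::false;false;true;false] 4) (pp [::0;1;1;0] 4) * 1)%R.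
Proof.
rewrite (@L_merge false 5 [::0;1;2;2;0] [::false;false;false;true;false] 1 [::0;1;1;1;0] [::1;2;3] [::0;1;1] [::false;false;true] 3 He isT);
  rewrite ?(@L_red false 5 3 [::0;1;1;1;0] [::false;false;false;true;false] [::0;1;1;0] [::false;false;true;false] [::0;1;1;2;3] He isT isT);
  rewrite ?(@L_ends false 3 [::0;1;1] [::false;false;true] [::false;false;false] He isT isT);
  rewrite ?(@L_red false 3 1 [::0;1;1] [::false;false;false] [::0;1] [::false;false] [::0;1;1] He isT isT);
  rewrite ?L_two ?mul1r ?mulr1; try reflexivity.
Qed.

Lemma R4_0 (He : (q == Q) = false) :
  alpha 5 (wf [::false;false;false;true;false] 5) (pp [::0;1;2;0;2] 5) = (alpha 4 (wf [::false;false;true;false] 4) (pp [::0;1;0;1] 4) * alpha 3 (wf [::false;false;false] 3) (pp [::0;1;0] 3))%R.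
Proof.
rewrite (@L_merge false 5 [::0;1;2;0;2] [::false;false;false;true;false] 0 [::0;0;1;0;1] [::0;1;3] [::0;1;0] [::false;false;true] 3 He isT);
  rewrite ?(@L_red false 5 3 [::0;0;1;0;1] [::false;false;false;true;false] [::0;1;0;1] [::false;false;true;false] [::0;0;1;2;3] He isT isT);
  rewrite ?(@L_ends false 3 [::0;1;0] [::false;false;true] [::false;false;false] He isT isT);
  rewrite ?L_two ?mul1r ?mulr1; try reflexivity.
Qed.

Lemma R4_1 (He : (q == Q) = false) :
  alpha 5 (wf [::false;false;false;true;false] 5) (pp [::0;1;2;0;2] 5) = (alpha 4 (wf [::false;false;true;false] 4) (pp [::0;1;0;1] 4) * 1)%R.
Proof.
rewrite (@L_merge false 5 [::0;1;2;0;2] [::false;false;false;true;false] 1 [::0;1;1;0;1] [::1;2;4] [::0;1;1] [::false;false;false] 3 He isT);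
  rewrite ?(@L_red false 5 3 [::0;1;1;0;1] [::false;false;false;true;false] [::0;1;0;1] [::false;false;true;false] [::0;1;1;2;3] He isT isT);
  rewrite ?(@L_red false 3 1 [::0;1;1] [::false;false;false] [::0;1] [::false;false] [::0;1;1] He isT isT);
  rewrite ?L_two ?mul1r ?mulr1; try reflexivity.
Qed.

Lemma R5_0 (He : (q == Q) = false) :
  alpha 6 (wf [::false;false;true;true;false;false] 6) (pp [::0;1;1;2;2;0] 6) = (alpha 4 (wf [::false;true;false;false] 4) (pp [::0;1;1;0] 4) * alpha 4 (wf [::false;false;true;false] 4) (pp [::0;1;1;0] 4))%R.
Proof.
rewrite (@L_merge false 6 [::0;1;1;2;2;0] [::false;false;true;true;false;false] 0 [::0;0;0;1;1;0] [::0;1;2;5] [::0;1;1;0] [::false;false;true;false] 4 He isT);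
  rewrite ?(@L_red false 6 4 [::0;0;0;1;1;0] [::false;false;true;true;false;false] [::0;0;1;1;0] [::false;true;true;false;false] [::0;0;1;2;3;4] He isT isT);
  rewrite ?(@L_ends false 5 [::0;0;1;1;0] [::false;true;true;false;false] [::true;true;true;false;false] He isT isT);
  rewrite ?(@L_red false 5 3 [::0;0;1;1;0] [::true;true;true;false;false] [::0;1;1;0] [::true;true;false;false] [::0;0;1;2;3] He isT isT);
  rewrite ?(@L_ends false 4 [::0;1;1;0] [::true;true;false;false] [::false;true;false;false] He isT isT);
  rewrite ?L_two ?mul1r ?mulr1; try reflexivity.
Qed.

Lemma R5_2 (He : (q == Q) = false) :
  alpha 6 (wf [::false;false;true;true;false;false] 6) (pp [::0;1;1;2;2;0] 6) = (alpha 5 (wf [::false;false;true;false;false] 5) (pp [::0;1;1;1;0] 5) * 1)%R.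
Proof.
rewrite (@L_merge false 6 [::0;1;1;2;2;0] [::false;false;true;true;false;false] 2 [::0;1;1;1;1;0] [::1;2;3;4] [::0;0;1;1] [::false;true;true;false] 4 He isT);
  rewrite ?(@L_red false 6 4 [::0;1;1;1;1;0] [::false;false;true;true;false;false] [::0;1;1;1;0] [::false;false;true;false;false] [::0;1;2;2;3;4] He isT isT);
  rewrite ?(@L_ends false 4 [::0;0;1;1] [::false;true;true;false] [::true;true;true;true] He isT isT);
  rewrite ?(@L_red false 4 1 [::0;0;1;1] [::true;true;true;true] [::0;1] [::true;true] [::0;0;1;1] He isT isT);
  rewrite ?L_two ?mul1r ?mulr1; try reflexivity.
Qed.

Lemma R5_4 (He : (q == Q) = false) :
  alpha 6 (wf [::false;false;true;true;false;false] 6) (pp [::0;1;1;2;2;0] 6) = (alpha 4 (wf [::false;false;true;false] 4) (pp [::0;1;1;0] 4) * alpha 4 (wf [::false;true;false;false] 4) (pp [::0;1;1;0] 4))%R.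
Proof.
rewrite (@L_merge false 6 [::0;1;1;2;2;0] [::false;false;true;true;false;false] 4 [::0;1;1;0;0;0] [::0;3;4;5] [::0;1;1;0] [::false;true;false;false] 4 He isT);
  rewrite ?(@L_red false 6 4 [::0;1;1;0;0;0] [::false;false;true;true;false;false] [::0;1;1;0;0] [::false;false;true;true;false] [::0;1;2;3;4;4] He isT isT);
  rewrite ?(@L_ends false 5 [::0;1;1;0;0] [::false;false;true;true;false] [::false;false;true;true;true] He isT isT);
  rewrite ?(@L_red false 5 3 [::0;1;1;0;0] [::false;false;true;true;true] [::0;1;1;0] [::false;false;true;true] [::0;1;2;3;3] He isT isT);
  rewrite ?(@L_ends false 4 [::0;1;1;0] [::false;false;true;true] [::false;false;true;false] He isT isT);
  rewrite ?L_two ?mul1r ?mulr1; try reflexivity.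
Qed.

Lemma R6_0 (He : (q == Q) = false) :
  alpha 6 (wf [::false;false;false;true;false;false] 6) (pp [::0;1;2;2;1;0] 6) = (alpha 4 (wf [::false;false;true;false] 4) (pp [::0;1;1;0] 4) * alpha 3 (wf [::false;false;false] 3) (pp [::0;1;0] 3))%R.
Proof.
rewrite (@L_merge false 6 [::0;1;2;2;1;0] [::false;false;false;true;false;false] 0 [::0;0;1;1;0;0] [::0;1;4;5] [::0;1;1;0] [::false;false;false;false] 4 He isT);
  rewrite ?(@L_red false 6 3 [::0;0;1;1;0;0] [::false;false;false;true;false;false] [::0;1;1;0] [::false;false;true;false] [::0;0;1;2;3;3] He isT isT);
  rewrite ?(@L_red false 4 2 [::0;1;1;0] [::false;false;false;false] [::0;1;0] [::false;false;false] [::0;1;1;2] He isT isT);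
  rewrite ?L_two ?mul1r ?mulr1; try reflexivity.
Qed.

Lemma R6_1 (He : (q == Q) = false) :
  alpha 6 (wf [::false;false;false;true;false;false] 6) (pp [::0;1;2;2;1;0] 6) = (alpha 5 (wf [::false;false;true;false;false] 5) (pp [::0;1;1;1;0] 5) * alpha 4 (wf [::false;false;true;false] 4) (pp [::0;1;1;0] 4))%R.
Proof.
rewrite (@L_merge false 6 [::0;1;2;2;1;0] [::false;false;false;true;false;false] 1 [::0;1;1;1;1;0] [::1;2;3;4] [::0;1;1;0] [::false;false;true;false] 4 He isT);
  rewrite ?(@L_red false 6 4 [::0;1;1;1;1;0] [::false;false;false;true;false;false] [::0;1;1;1;0] [::false;false;true;false;false] [::0;1;1;2;3;4] He isT isT);
  rewrite ?L_two ?mul1r ?mulr1; try reflexivity.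
Qed.

Lemma R6_4 (He : (q == Q) = false) :
  alpha 6 (wf [::false;false;false;true;false;false] 6) (pp [::0;1;2;2;1;0] 6) = (alpha 4 (wf [::false;false;true;false] 4) (pp [::0;1;1;0] 4) * alpha 3 (wf [::false;false;false] 3) (pp [::0;1;0] 3))%R.
Proof.
rewrite (@L_merge false 6 [::0;1;2;2;1;0] [::false;false;false;true;false;false] 4 [::0;0;1;1;0;0] [::0;1;4;5] [::0;1;1;0] [::false;false;false;false] 4 He isT);
  rewrite ?(@L_red false 6 3 [::0;0;1;1;0;0] [::false;false;false;true;false;false] [::0;1;1;0] [::false;false;true;false] [::0;0;1;2;3;3] He isT isT);
  rewrite ?(@L_red false 4 2 [::0;1;1;0] [::false;false;false;false] [::0;1;0] [::false;false;false] [::0;1;1;2] He isT isT);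
  rewrite ?L_two ?mul1r ?mulr1; try reflexivity.
Qed.

Lemma R7_0 (He : (q == Q) = false) :
  alpha 6 (wf [::false;false;true;true;false;false] 6) (pp [::0;1;0;2;1;2] 6) = (alpha 4 (wf [::false;true;false;false] 4) (pp [::0;1;0;1] 4) * alpha 4 (wf [::false;false;true;false] 4) (pp [::0;1;0;1] 4))%R.
Proof.
rewrite (@L_merge false 6 [::0;1;0;2;1;2] [::false;false;true;true;false;false] 0 [::0;0;0;1;0;1] [::0;1;2;4] [::0;1;0;1] [::false;false;true;false] 4 He isT);
  rewrite ?(@L_red false 6 4 [::0;0;0;1;0;1] [::false;false;true;true;false;false] [::0;0;1;0;1] [::false;true;true;false;false] [::0;0;1;2;3;4] He isT isT);
  rewrite ?(@L_ends false 5 [::0;0;1;0;1] [::false;true;true;false;false] [::true;true;true;false;false] He isT isT);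
  rewrite ?(@L_red false 5 3 [::0;0;1;0;1] [::true;true;true;false;false] [::0;1;0;1] [::true;true;false;false] [::0;0;1;2;3] He isT isT);
  rewrite ?(@L_ends false 4 [::0;1;0;1] [::true;true;false;false] [::false;true;false;false] He isT isT);
  rewrite ?L_two ?mul1r ?mulr1; try reflexivity.
Qed.

Lemma R7_2 (He : (q == Q) = false) :
  alpha 6 (wf [::false;false;true;true;false;false] 6) (pp [::0;1;0;2;1;2] 6) = (alpha 5 (wf [::false;false;true;false;false] 5) (pp [::0;1;0;1;0] 5) * 1)%R.
Proof.
rewrite (@L_merge false 6 [::0;1;0;2;1;2] [::false;false;true;true;false;false] 2 [::0;1;0;0;1;0] [::0;2;3;5] [::0;0;1;1] [::false;true;true;false] 4 He isT);
  rewrite ?(@L_red false 6 4 [::0;1;0;0;1;0] [::false;false;true;true;false;false] [::0;1;0;1;0] [::false;false;true;false;false] [::0;1;2;2;3;4] He isT isT);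
  rewrite ?(@L_ends false 4 [::0;0;1;1] [::false;true;true;false] [::true;true;true;true] He isT isT);
  rewrite ?(@L_red false 4 1 [::0;0;1;1] [::true;true;true;true] [::0;1] [::true;true] [::0;0;1;1] He isT isT);
  rewrite ?L_two ?mul1r ?mulr1; try reflexivity.
Qed.

Lemma R7_4 (He : (q == Q) = false) :
  alpha 6 (wf [::false;false;true;true;false;false] 6) (pp [::0;1;0;2;1;2] 6) = (alpha 4 (wf [::false;false;true;false] 4) (pp [::0;1;0;1] 4) * alpha 4 (wf [::false;true;false;false] 4) (pp [::0;1;0;1] 4))%R.
Proof.
rewrite (@L_merge false 6 [::0;1;0;2;1;2] [::false;false;true;true;false;false] 4 [::0;1;0;1;1;1] [::1;3;4;5] [::0;1;0;1] [::false;true;false;false] 4 He isT);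
  rewrite ?(@L_red false 6 4 [::0;1;0;1;1;1] [::false;false;true;true;false;false] [::0;1;0;1;1] [::false;false;true;true;false] [::0;1;2;3;4;4] He isT isT);
  rewrite ?(@L_ends false 5 [::0;1;0;1;1] [::false;false;true;true;false] [::false;false;true;true;true] He isT isT);
  rewrite ?(@L_red false 5 3 [::0;1;0;1;1] [::false;false;true;true;true] [::0;1;0;1] [::false;false;true;true] [::0;1;2;3;3] He isT isT);
  rewrite ?(@L_ends false 4 [::0;1;0;1] [::false;false;true;true] [::false;false;true;false] He isT isT);
  rewrite ?L_two ?mul1r ?mulr1; try reflexivity.
Qed.

Lemma R8_0 (He : (q == Q) = false) :
  alpha 6 (wf [::false;false;false;true;false;false] 6) (pp [::0;1;2;0;2;1] 6) = (alpha 5 (wf [::false;false;true;false;false] 5) (pp [::0;1;0;1;0] 5) * alpha 4 (wf [::false;false;true;false] 4) (pp [::0;1;0;1] 4))%R.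
Proof.
rewrite (@L_merge false 6 [::0;1;2;0;2;1] [::false;false;false;true;false;false] 0 [::0;0;1;0;1;0] [::0;1;3;5] [::0;1;0;1] [::false;false;true;false] 4 He isT);
  rewrite ?(@L_red false 6 4 [::0;0;1;0;1;0] [::false;false;false;true;false;false] [::0;1;0;1;0] [::false;false;true;false;false] [::0;0;1;2;3;4] He isT isT);
  rewrite ?L_two ?mul1r ?mulr1; try reflexivity.
Qed.

Lemma R8_1 (He : (q == Q) = false) :
  alpha 6 (wf [::false;false;false;true;false;false] 6) (pp [::0;1;2;0;2;1] 6) = (alpha 4 (wf [::false;false;true;false] 4) (pp [::0;1;0;1] 4) * alpha 3 (wf [::false;false;false] 3) (pp [::0;1;0] 3))%R.
Proof.
rewrite (@L_merge false 6 [::0;1;2;0;2;1] [::false;false;false;true;false;false] 1 [::0;1;1;0;1;1] [::1;2;4;5] [::0;1;1;0] [::false;false;false;false] 4 He isT);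
  rewrite ?(@L_red false 6 3 [::0;1;1;0;1;1] [::false;false;false;true;false;false] [::0;1;0;1] [::false;false;true;false] [::0;1;1;2;3;3] He isT isT);
  rewrite ?(@L_red false 4 2 [::0;1;1;0] [::false;false;false;false] [::0;1;0] [::false;false;false] [::0;1;1;2] He isT isT);
  rewrite ?L_two ?mul1r ?mulr1; try reflexivity.
Qed.

Lemma R8_4 (He : (q == Q) = false) :
  alpha 6 (wf [::false;false;false;true;false;false] 6) (pp [::0;1;2;0;2;1] 6) = (alpha 4 (wf [::false;false;true;false] 4) (pp [::0;1;0;1] 4) * alpha 3 (wf [::false;false;false] 3) (pp [::0;1;0] 3))%R.
Proof.
rewrite (@L_merge false 6 [::0;1;2;0;2;1] [::false;false;false;true;false;false] 4 [::0;1;1;0;1;1] [::1;2;4;5] [::0;1;1;0] [::false;false;false;false] 4 He isT);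
  rewrite ?(@L_red false 6 3 [::0;1;1;0;1;1] [::false;false;false;true;false;false] [::0;1;0;1] [::false;false;true;false] [::0;1;1;2;3;3] He isT isT);
  rewrite ?(@L_red false 4 2 [::0;1;1;0] [::false;false;false;false] [::0;1;0] [::false;false;false] [::0;1;1;2] He isT isT);
  rewrite ?L_two ?mul1r ?mulr1; try reflexivity.
Qed.

Lemma R9_0 (He : (q == Q) = false) :
  alpha 6 (wf [::false;false;false;false;true;false] 6) (pp [::0;1;2;0;2;1] 6) = (alpha 5 (wf [::false;false;false;true;false] 5) (pp [::0;1;0;1;0] 5) * alpha 4 (wf [::false;false;false;false] 4) (pp [::0;1;0;1] 4))%R.
Proof.
rewrite (@L_merge false 6 [::0;1;2;0;2;1] [::false;false;false;false;true;false] 0 [::0;0;1;0;1;0] [::0;1;3;5] [::0;1;0;1] [::false;false;false;false] 4 He isT);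
  rewrite ?(@L_red false 6 4 [::0;0;1;0;1;0] [::false;false;false;false;true;false] [::0;1;0;1;0] [::false;false;false;true;false] [::0;0;1;2;3;4] He isT isT);
  rewrite ?L_two ?mul1r ?mulr1; try reflexivity.
Qed.

Lemma R9_1 (He : (q == Q) = false) :
  alpha 6 (wf [::false;false;false;false;true;false] 6) (pp [::0;1;2;0;2;1] 6) = (alpha 4 (wf [::false;false;false;false] 4) (pp [::0;1;0;1] 4) * alpha 4 (wf [::false;false;true;false] 4) (pp [::0;1;1;0] 4))%R.
Proof.
rewrite (@L_merge false 6 [::0;1;2;0;2;1] [::false;false;false;false;true;false] 1 [::0;1;1;0;1;1] [::1;2;4;5] [::0;1;1;0] [::false;false;true;false] 4 He isT);
  rewrite ?(@L_ends false 6 [::0;1;1;0;1;1] [::false;false;false;false;true;false] [::false;false;false;false;true;true] He isT isT);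
  rewrite ?(@L_red false 6 3 [::0;1;1;0;1;1] [::false;false;false;false;true;true] [::0;1;0;1] [::false;false;false;true] [::0;1;1;2;3;3] He isT isT);
  rewrite ?(@L_ends false 4 [::0;1;0;1] [::false;false;false;true] [::false;false;false;false] He isT isT);
  rewrite ?L_two ?mul1r ?mulr1; try reflexivity.
Qed.

Lemma R9_2 (He : (q == Q) = false) :
  alpha 6 (wf [::false;false;false;false;true;false] 6) (pp [::0;1;2;0;2;1] 6) = (alpha 5 (wf [::false;false;false;true;false] 5) (pp [::0;1;0;0;1] 5) * alpha 4 (wf [::false;false;false;false] 4) (pp [::0;1;0;1] 4))%R.
Proof.
rewrite (@L_merge false 6 [::0;1;2;0;2;1] [::false;false;false;false;true;false] 2 [::0;1;0;0;0;1] [::0;2;3;4] [::0;1;0;1] [::false;false;false;true] 4 He isT);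
  rewrite ?(@L_red false 6 4 [::0;1;0;0;0;1] [::false;false;false;false;true;false] [::0;1;0;0;1] [::false;false;false;true;false] [::0;1;2;2;3;4] He isT isT);
  rewrite ?(@L_ends false 4 [::0;1;0;1] [::false;false;false;true] [::false;false;false;false] He isT isT);
  rewrite ?L_two ?mul1r ?mulr1; try reflexivity.
Qed.

Lemma R10_0 (He : (q == Q) = false) :
  alpha 6 (wf [::false;false;false;false;true;false] 6) (pp [::0;1;2;0;1;2] 6) = (alpha 5 (wf [::false;false;false;true;false] 5) (pp [::0;1;0;0;1] 5) * alpha 4 (wf [::false;false;false;false] 4) (pp [::0;1;0;1] 4))%R.
Proof.
rewrite (@L_merge false 6 [::0;1;2;0;1;2] [::false;false;false;false;true;false] 0 [::0;0;1;0;0;1] [::0;1;3;4] [::0;1;0;1] [::false;false;false;true] 4 He isT);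
  rewrite ?(@L_red false 6 4 [::0;0;1;0;0;1] [::false;false;false;false;true;false] [::0;1;0;0;1] [::false;false;false;true;false] [::0;0;1;2;3;4] He isT isT);
  rewrite ?(@L_ends false 4 [::0;1;0;1] [::false;false;false;true] [::false;false;false;false] He isT isT);
  rewrite ?L_two ?mul1r ?mulr1; try reflexivity.
Qed.

Lemma R10_1 (He : (q == Q) = false) :
  alpha 6 (wf [::false;false;false;false;true;false] 6) (pp [::0;1;2;0;1;2] 6) = (alpha 4 (wf [::false;false;false;false] 4) (pp [::0;1;0;1] 4) * alpha 4 (wf [::false;false;true;false] 4) (pp [::0;1;0;1] 4))%R.
Proof.
rewrite (@L_merge false 6 [::0;1;2;0;1;2] [::false;false;false;false;true;false] 1 [::0;1;1;0;1;1] [::1;2;4;5] [::0;1;0;1] [::false;false;true;false] 4 He isT);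
  rewrite ?(@L_ends false 6 [::0;1;1;0;1;1] [::false;false;false;false;true;false] [::false;false;false;false;true;true] He isT isT);
  rewrite ?(@L_red false 6 3 [::0;1;1;0;1;1] [::false;false;false;false;true;true] [::0;1;0;1] [::false;false;false;true] [::0;1;1;2;3;3] He isT isT);
  rewrite ?(@L_ends false 4 [::0;1;0;1] [::false;false;false;true] [::false;false;false;false] He isT isT);
  rewrite ?L_two ?mul1r ?mulr1; try reflexivity.
Qed.

Lemma R10_2 (He : (q == Q) = false) :
  alpha 6 (wf [::false;false;false;false;true;false] 6) (pp [::0;1;2;0;1;2] 6) = (alpha 5 (wf [::false;false;false;true;false] 5) (pp [::0;1;0;1;0] 5) * alpha 4 (wf [::false;false;false;false] 4) (pp [::0;1;0;1] 4))%R.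
Proof.
rewrite (@L_merge false 6 [::0;1;2;0;1;2] [::false;false;false;false;true;false] 2 [::0;1;0;0;1;0] [::0;2;3;5] [::0;1;0;1] [::false;false;false;false] 4 He isT);
  rewrite ?(@L_red false 6 4 [::0;1;0;0;1;0] [::false;false;false;false;true;false] [::0;1;0;1;0] [::false;false;false;true;false] [::0;1;2;2;3;4] He isT isT);
  rewrite ?L_two ?mul1r ?mulr1; try reflexivity.
Qed.

Lemma R11_0 (He : (q == Q) = false) :
  alpha 6 (wf [::false;false;false;true;true;false] 6) (pp [::0;1;2;0;2;1] 6) = (alpha 5 (wf [::false;false;true;true;false] 5) (pp [::0;1;0;1;0] 5) * alpha 4 (wf [::false;false;true;false] 4) (pp [::0;1;0;1] 4))%R.
Proof.
rewrite (@L_merge false 6 [::0;1;2;0;2;1] [::false;false;false;true;true;false] 0 [::0;0;1;0;1;0] [::0;1;3;5] [::0;1;0;1] [::false;false;true;false] 4 He isT);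
  rewrite ?(@L_red false 6 4 [::0;0;1;0;1;0] [::false;false;false;true;true;false] [::0;1;0;1;0] [::false;false;true;true;false] [::0;0;1;2;3;4] He isT isT);
  rewrite ?L_two ?mul1r ?mulr1; try reflexivity.
Qed.

Lemma R11_1 (He : (q == Q) = false) :
  alpha 6 (wf [::false;false;false;true;true;false] 6) (pp [::0;1;2;0;2;1] 6) = (alpha 4 (wf [::false;false;true;false] 4) (pp [::0;1;0;1] 4) * alpha 4 (wf [::false;false;true;false] 4) (pp [::0;1;1;0] 4))%R.
Proof.
rewrite (@L_merge false 6 [::0;1;2;0;2;1] [::false;false;false;true;true;false] 1 [::0;1;1;0;1;1] [::1;2;4;5] [::0;1;1;0] [::false;false;true;false] 4 He isT);
  rewrite ?(@L_ends false 6 [::0;1;1;0;1;1] [::false;false;false;true;true;false] [::false;false;false;true;true;true] He isT isT);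
  rewrite ?(@L_red false 6 3 [::0;1;1;0;1;1] [::false;false;false;true;true;true] [::0;1;0;1] [::false;false;true;true] [::0;1;1;2;3;3] He isT isT);
  rewrite ?(@L_ends false 4 [::0;1;0;1] [::false;false;true;true] [::false;false;true;false] He isT isT);
  rewrite ?L_two ?mul1r ?mulr1; try reflexivity.
Qed.

Lemma R11_3 (He : (q == Q) = false) :
  alpha 6 (wf [::false;false;false;true;true;false] 6) (pp [::0;1;2;0;2;1] 6) = (alpha 5 (wf [::false;false;false;true;false] 5) (pp [::0;1;0;0;1] 5) * alpha 4 (wf [::false;false;true;false] 4) (pp [::0;1;0;1] 4))%R.
Proof.
rewrite (@L_merge false 6 [::0;1;2;0;2;1] [::false;false;false;true;true;false] 3 [::0;1;0;0;0;1] [::0;2;3;4] [::0;1;0;1] [::false;false;true;true] 4 He isT);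
  rewrite ?(@L_red false 6 4 [::0;1;0;0;0;1] [::false;false;false;true;true;false] [::0;1;0;0;1] [::false;false;false;true;false] [::0;1;2;3;3;4] He isT isT);
  rewrite ?(@L_ends false 4 [::0;1;0;1] [::false;false;true;true] [::false;false;true;false] He isT isT);
  rewrite ?L_two ?mul1r ?mulr1; try reflexivity.
Qed.

Lemma R12_0 (He : (q == Q) = false) :
  alpha 6 (wf [::false;false;false;false;true;false] 6) (pp [::0;1;0;2;2;1] 6) = (alpha 4 (wf [::false;false;true;false] 4) (pp [::0;1;1;0] 4) * alpha 4 (wf [::false;false;false;false] 4) (pp [::0;1;0;1] 4))%R.
Proof.
rewrite (@L_merge false 6 [::0;1;0;2;2;1] [::false;false;false;false;true;false] 0 [::0;0;0;1;1;0] [::0;1;2;5] [::0;1;0;1] [::false;false;false;false] 4 He isT);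
  rewrite ?(@L_red false 6 3 [::0;0;0;1;1;0] [::false;false;false;false;true;false] [::0;1;1;0] [::false;false;true;false] [::0;0;0;1;2;3] He isT isT);
  rewrite ?L_two ?mul1r ?mulr1; try reflexivity.
Qed.

Lemma R12_1 (He : (q == Q) = false) :
  alpha 6 (wf [::false;false;false;false;true;false] 6) (pp [::0;1;0;2;2;1] 6) = (alpha 4 (wf [::false;false;true;false] 4) (pp [::0;1;1;0] 4) * alpha 4 (wf [::false;false;false;false] 4) (pp [::0;1;0;1] 4))%R.
Proof.
rewrite (@L_merge false 6 [::0;1;0;2;2;1] [::false;false;false;false;true;false] 1 [::0;0;0;1;1;0] [::0;1;2;5] [::0;1;0;1] [::false;false;false;false] 4 He isT);
  rewrite ?(@L_red false 6 3 [::0;0;0;1;1;0] [::false;false;false;false;true;false] [::0;1;1;0] [::false;false;true;false] [::0;0;0;1;2;3] He isT isT);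
  rewrite ?L_two ?mul1r ?mulr1; try reflexivity.
Qed.

Lemma R12_2 (He : (q == Q) = false) :
  alpha 6 (wf [::false;false;false;false;true;false] 6) (pp [::0;1;0;2;2;1] 6) = (alpha 5 (wf [::false;false;false;true;false] 5) (pp [::0;1;0;0;1] 5) * 1)%R.
Proof.
rewrite (@L_merge false 6 [::0;1;0;2;2;1] [::false;false;false;false;true;false] 2 [::0;1;0;0;0;1] [::0;2;3;4] [::0;0;1;1] [::false;false;false;true] 4 He isT);
  rewrite ?(@L_red false 6 4 [::0;1;0;0;0;1] [::false;false;false;false;true;false] [::0;1;0;0;1] [::false;false;false;true;false] [::0;1;2;2;3;4] He isT isT);
  rewrite ?(@L_ends false 4 [::0;0;1;1] [::false;false;false;true] [::false;false;false;false] He isT isT);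
  rewrite ?(@L_red false 4 1 [::0;0;1;1] [::false;false;false;false] [::0;1] [::false;false] [::0;0;1;1] He isT isT);
  rewrite ?L_two ?mul1r ?mulr1; try reflexivity.
Qed.


Local Notation nq := (alpha 3 (wf [::false;false;false] 3) (pp [::0;1;0] 3)).
Local Notation xq := (alpha 4 (wf [::false;false;false;false] 4) (pp [::0;1;0;1] 4)).
Local Notation nqQ := (alpha 4 (wf [::false;false;true;false] 4) (pp [::0;1;1;0] 4)).
Local Notation nQq := (alpha 4 (wf [::false;true;false;false] 4) (pp [::0;1;1;0] 4)).
Local Notation xqQ := (alpha 4 (wf [::false;false;true;false] 4) (pp [::0;1;0;1] 4)).
Local Notation xQq := (alpha 4 (wf [::false;true;false;false] 4) (pp [::0;1;0;1] 4)).

Local Open Scope ring_scope.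

Lemma facts_q e (He : (q == Q) = e) : [/\ nq * nq = nq, nq * xq = xq & xq * xq = xq].
Proof.
have f1 : nq * nq = nq by rewrite -(R0_0 e He) (R0_1 e He) mulr1.
have f2 : nq * xq = xq by rewrite -(R1_0 e He) (R1_2 e He) mulr1.
split=> //; by rewrite -(R2_2 e He) (R2_1 e He) mulrC.
Qed.

Lemma idem_norm (x : Cplx) : x * x = x -> `|x| ^+ 2 * x = x.
Proof.
move=> h; have [->|nz] := eqVneq x 0; first by rewrite mulr0.
have x1 : x = 1 by apply: (mulIf nz); rewrite mul1r.
by rewrite x1 normr1 expr1n mul1r.
Qed.

Lemma main_ne (hne : (q == Q) = false) :
    [/\ nu1 alpha q ^+ 2 = nu1 alpha q /\ xi1 alpha q ^+ 2 = xi1 alpha q,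
        [/\ nu2 alpha q Q * nu1 alpha q = nu2 alpha q Q,
            xi1 alpha q * nu1 alpha q = xi1 alpha q
          & xi2 alpha q Q * nu1 alpha q = xi2 alpha q Q],
        `|nu2 alpha q Q| ^+ 2 * nu2 alpha q Q = nu2 alpha q Q /\
        `|xi2 alpha q Q| ^+ 2 * xi2 alpha q Q = xi2 alpha q Q,
        nu2 alpha q Q * xi1 alpha q = xi2 alpha q Q * xi1 alpha q
      & nu2 alpha q Q * xi2 alpha q Q = nu2 alpha q Q * xi2 alpha q Q * xi1 alpha q].
Proof.
rewrite nu1E xi1E nu2E xi2E.
rewrite (@L_ends false 4 [::0;1;1;0] [::false;false;true;true] [::false;false;true;false] hne isT isT).
rewrite (@L_ends false 4 [::0;1;0;1] [::false;false;true;true] [::false;false;true;false] hne isT isT).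
have [f1a f2b f1b] := facts_q false hne.
have f2a : nqQ * nq = nqQ by rewrite -(R3_0 hne) (R3_1 hne) mulr1.
have f2c : xqQ * nq = xqQ by rewrite -(R4_0 hne) (R4_1 hne) mulr1.
have cn : nqQ^* = nQq.
  by rewrite -(@L_mir 4 [::0;1;1;0] [::false;false;true;false] [::0;1;1;0] [::false;true;false;false] isT isT).
have cx : xqQ^* = xQq.
  rewrite -(@L_mir 4 [::0;1;0;1] [::false;false;true;false] [::1;0;1;0] [::false;true;false;false] isT isT).
  by rewrite (@L_red false 4 3 [::1;0;1;0] [::false;true;false;false] [::0;1;0;1] [::false;true;false;false] [::0;1;2;3] hne isT isT).
have f3a : nQq * nqQ * nqQ = nqQ.
  by rewrite -(R5_0 hne) (R5_2 hne) mulr1 -(R6_1 hne) (R6_0 hne) f2a.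
have f3b : xQq * xqQ * xqQ = xqQ.
  by rewrite -(R7_0 hne) (R7_2 hne) mulr1 -(R8_0 hne) (R8_1 hne) f2c.
have f4 : nqQ * xq = xqQ * xq.
  by rewrite mulrC -(R9_1 hne) (R9_0 hne) -(R10_2 hne) (R10_1 hne) mulrC.
have f5 : nqQ * xqQ = nqQ * xqQ * xq.
  have := R12_2 hne; rewrite (R12_0 hne) mulr1 => hY.
  by rewrite mulrC -(R11_1 hne) (R11_3 hne) -hY [RHS]mulrAC -[nqQ * xq * xq]mulrA f1b.
split.
- by rewrite !expr2; split.
- by split; rewrite ?f1a // mulrC f2b.
- split; rewrite normCK ?cn ?cx.
  + by rewrite [nqQ * nQq]mulrC f3a.
  + by rewrite [xqQ * xQq]mulrC f3b.
- exact: f4.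
- exact: f5.
Qed.

Lemma main_eq (heq : q = Q) :
    [/\ nu1 alpha q ^+ 2 = nu1 alpha q /\ xi1 alpha q ^+ 2 = xi1 alpha q,
        [/\ nu2 alpha q Q * nu1 alpha q = nu2 alpha q Q,
            xi1 alpha q * nu1 alpha q = xi1 alpha q
          & xi2 alpha q Q * nu1 alpha q = xi2 alpha q Q],
        `|nu2 alpha q Q| ^+ 2 * nu2 alpha q Q = nu2 alpha q Q /\
        `|xi2 alpha q Q| ^+ 2 * xi2 alpha q Q = xi2 alpha q Q,
        nu2 alpha q Q * xi1 alpha q = xi2 alpha q Q * xi1 alpha q
      & nu2 alpha q Q * xi2 alpha q Q = nu2 alpha q Q * xi2 alpha q Q * xi1 alpha q].
Proof.
have He : (q == Q) = true by rewrite heq eqxx.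
rewrite nu1E xi1E nu2E xi2E.
rewrite (@L_red true 4 2 [::0;1;1;0] [::false;false;true;true] [::0;1;0] [::false;false;false] [::0;1;1;2] He isT isT).
rewrite (@L_ends true 4 [::0;1;0;1] [::false;false;true;true] [::false;false;false;false] He isT isT).
have [f1a f2b f1b] := facts_q true He.
split.
- by rewrite !expr2; split.
- by split; rewrite ?f1a // mulrC f2b.
- by split; apply: idem_norm.
- by rewrite f2b f1b.
- by rewrite -mulrA f1b.
Qed.

End Gen.

Local Open Scope ring_scope.

Theorem lemma6p7 (F : finType) (alpha : weights F) :
  admissible alpha ->
  forall q Q : F,
    [/\ (* (1) *) nu1 alpha q ^+ 2 = nu1 alpha q /\ xi1 alpha q ^+ 2 = xi1 alpha q,
        (* (2) *) [/\ nu2 alpha q Q * nu1 alpha q = nu2 alpha q Q,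
                      xi1 alpha q * nu1 alpha q = xi1 alpha q
                    & xi2 alpha q Q * nu1 alpha q = xi2 alpha q Q],
        (* (3) *) `|nu2 alpha q Q| ^+ 2 * nu2 alpha q Q = nu2 alpha q Q /\
                  `|xi2 alpha q Q| ^+ 2 * xi2 alpha q Q = xi2 alpha q Q,
        (* (4) *) nu2 alpha q Q * xi1 alpha q = xi2 alpha q Q * xi1 alpha q
      & (* (5) *) nu2 alpha q Q * xi2 alpha q Q = nu2 alpha q Q * xi2 alpha q Q * xi1 alpha q].
Proof.
move=> Hadm q Q.
case: (eqVneq q Q) => [heq|hne].
- exact: (@main_eq F alpha q Q Hadm heq).
- exact: (@main_ne F alpha q Q Hadm (negbTE hne)).
Qed.
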